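(* Let $1\le m<n$, let $h\in\mathbb{R}[x_1,\ldots,x_n]$, and let $\boldsymbol{\ell}\in\mathbb{R}^{n\times m}$, $\mathbf{s}\in\mathbb{R}^{n\times(n-m)}$ be such that $[\boldsymbol{\ell},\mathbf{s}]$ is an orthogonal $n\times n$ matrix. Let $\theta_1,\ldots,\theta_r>0$ and $\mathbf{v}_1,\ldots,\mathbf{v}_r\in\mathcal{E}_{n-m}$. Define, for $\mathbf{x}\in\mathcal{E}_n$, \[ \hat h(\mathbf{x}):=\sum_{j=1}^r\theta_j\,h\big(\boldsymbol{\ell}\boldsymbol{\ell}^T\mathbf{x}+(1-\|\boldsymbol{\ell}^T\mathbf{x}\|^2)^{1/2}\,\mathbf{s}\mathbf{v}_j\big), \] and the polynomial $\hat f\in\mathbb{R}[X_1,\ldots,X_m,Y]$ by \[ \hat f(X,Y):=\sum_{j=1}^r\theta_j\,h\big(\boldsymbol{\ell}X+Y\,\mathbf{s}\mathbf{v}_j\big),\qquad (X,Y)\in\mathbb{R}^m\times\mathbb{R}. \] Let \[ \rho^+:=\min\{\hat f(X,Y):(X,Y)\in\mathbb{S}^m,\ Y\ge0\},\qquad \rho^-:=\min\{\hat f(X,-Y):(X,Y)\in\mathbb{S}^m,\ Y\le0\}, \] and $\rho:=\min[\rho^+,\rho^-]$ (so that $\rho=\min\{\hat f(X,|Y|):(X,Y)\in\mathbb{S}^m\}$). Then \[ \min\{\hat h(\mathbf{x}):\mathbf{x}\in\mathbb{S}^{n-1}\}=\min\{\hat h(\mathbf{x}):\mathbf{x}\in\mathcal{E}_n\}=\rho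 . \]
   Context: $\mathcal{E}_k=\{\mathbf{x}\in\mathbb{R}^k:\|\mathbf{x}\|\le1\}$ is the closed Euclidean unit ball and $\mathbb{S}^{k-1}=\{\mathbf{x}\in\mathbb{R}^k:\|\mathbf{x}\|=1\}$ the unit sphere of $\mathbb{R}^k$ (so $\mathbb{S}^m\subset\mathbb{R}^{m+1}$). In the paper, the columns of $\boldsymbol{\ell}$ and $\mathbf{s}$ are orthonormal eigenvectors of $\mathrm{E}_{\mu_n}[\nabla h\nabla h^T]$ ($\mu_n$ the uniform probability on $\mathcal{E}_n$) associated with the $m$ largest, resp. the remaining $n-m$, eigenvalues, and $(\theta_j,\mathbf{v}_j)$ is a cubature rule on $\mathcal{E}_{n-m}$ exact for the degree of $h$; only the orthogonality of $[\boldsymbol{\ell},\mathbf{s}]$ and $\theta_j>0$, $\mathbf{v}_j\in\mathcal{E}_{n-m}$ are used in the statement. *)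

(* Defs.v *)
From HB Require Import structures.
From mathcomp Require Import all_boot all_order all_algebra.
From mathcomp Require Import mpoly.
From mathcomp Require Import reals.
Set Implicit Arguments. Unset Strict Implicit. Unset Printing Implicit Defensive.
Import Order.TTheory GRing.Theory Num.Theory.
Local Open Scope ring_scope.

Definition sqnorm (R : realType) (p : nat) (x : 'cV[R]_p) : R :=
  \sum_(i < p) x i 0 ^+ 2.

Definition mevalcv (R : realType) (p : nat) (h : {mpoly R[p]}) (x : 'cV[R]_p) : R :=
  h.@[fun i => x i 0].

Definition is_min (T : Type) (R : realType) (A : T -> Prop) (f : T -> R) (v : R) : Prop :=
  (exists2 x, A x & f x = v) /\ (forall x, A x -> v <= f x).

Definition hhat (R : realType) (m k r : nat) (h : {mpoly R[m + k]})
  (l : 'M[R]_(m + k, m)) (s : 'M[R]_(m + k, k))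
  (theta : 'I_r -> R) (v : 'I_r -> 'cV[R]_k) (x : 'cV[R]_(m + k)) : R :=
  \sum_(j < r) theta j *
     mevalcv h (l *m l^T *m x + Num.sqrt (1 - sqnorm (l^T *m x)) *: (s *m v j)).

Definition fhat (R : realType) (m k r : nat) (h : {mpoly R[m + k]})
  (l : 'M[R]_(m + k, m)) (s : 'M[R]_(m + k, k))
  (theta : 'I_r -> R) (v : 'I_r -> 'cV[R]_k) (X : 'cV[R]_m) (Y : R) : R :=
  \sum_(j < r) theta j * mevalcv h (l *m X + Y *: (s *m v j)).

(* Main.v *)
Require Import Defs.
From HB Require Import structures.
From mathcomp Require Import all_boot all_order all_algebra.
From mathcomp Require Import mpoly.
From mathcomp Require Import reals.
Import Order.TTheory GRing.Theory Num.Theory.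
Local Open Scope ring_scope.

Section Alg.
Variable R : realType.

Lemma sqnormE p (x : 'cV[R]_p) : sqnorm x = (x^T *m x) ord0 ord0.
Proof. by rewrite /sqnorm !mxE; apply: eq_bigr => i _; rewrite mxE expr2. Qed.

Lemma sqnorm_ge0 p (x : 'cV[R]_p) : 0 <= sqnorm x.
Proof. by apply: sumr_ge0 => i _; apply: sqr_ge0. Qed.

Lemma sqnormZ p c (x : 'cV[R]_p) : sqnorm (c *: x) = c ^+ 2 * sqnorm x.
Proof. by rewrite /sqnorm mulr_sumr; apply: eq_bigr => i _; rewrite mxE exprMn. Qed.

Variables (m k : nat) (l : 'M[R]_(m + k, m)) (s : 'M[R]_(m + k, k)).
Hypothesis horth : (row_mx l s)^T *m row_mx l s = 1%:M.

Lemma blocks : [/\ l^T *m l = 1%:M, l^T *m s = 0, s^T *m l = 0, s^T *m s = 1%:M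
   & l *m l^T + s *m s^T = 1%:M].
Proof.
have H := horth.
rewrite tr_row_mx mul_col_mx !mul_mx_row scalar_mx_block in H.
rewrite -/(block_mx _ _ _ _) in H.
have [H1 H2 H3 H4] := eq_block_mx H.
split => //.
have := mulmx1C horth.
by rewrite tr_row_mx mul_row_col.
Qed.

Lemma sqnorm_split (x : 'cV[R]_(m + k)) :
  sqnorm x = sqnorm (l^T *m x) + sqnorm (s^T *m x).
Proof.
have [_ _ _ _ H] := blocks.
rewrite !sqnormE !trmx_mul !trmxK.
have -> : x^T *m x = x^T *m l *m (l^T *m x) + x^T *m s *m (s^T *m x).
  by rewrite -[X in _ *m X = _](mul1mx x) -H mulmxDl mulmxDr !mulmxA.
by rewrite mxE.
Qed.

Lemma lTx_le (x : 'cV[R]_(m + k)) : sqnorm (l^T *m x) <= sqnorm x.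
Proof. by rewrite sqnorm_split lerDl sqnorm_ge0. Qed.

Variables (h : {mpoly R[m + k]}) (r : nat) (theta : 'I_r -> R) (v : 'I_r -> 'cV[R]_k).

Lemma hhat_fhat x : hhat h l s theta v x =
  fhat h l s theta v (l^T *m x) (Num.sqrt (1 - sqnorm (l^T *m x))).
Proof. by rewrite /hhat /fhat; apply: eq_bigr => j _; rewrite -mulmxA. Qed.

Hypothesis hk : (1 <= k)%N.

Lemma lift X Y : sqnorm X + Y ^+ 2 = 1 -> 0 <= Y ->
  exists2 x, sqnorm x = 1 & hhat h l s theta v x = fhat h l s theta v X Y.
Proof.
move=> H Y0.
have [hll hls hsl hss _] := blocks.
pose e : 'cV[R]_k := delta_mx (Ordinal hk) ord0.
have he : sqnorm e = 1 by rewrite sqnormE trmx_delta mul_delta_mx mxE !eqxx.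
exists (l *m X + Y *: (s *m e)).
  rewrite sqnorm_split !mulmxDr -!scalemxAr !mulmxA hll hls hsl hss.
  rewrite !mul0mx mul1mx scaler0 addr0 add0r sqnormZ.
  by rewrite mul1mx he mulr1.
rewrite hhat_fhat mulmxDr -scalemxAr !mulmxA hll hls mul0mx mul1mx scaler0 addr0.
have -> : 1 - sqnorm X = Y ^+ 2 by rewrite -H addrC addKr.
by rewrite sqrtr_sqr ger0_norm.
Qed.

Lemma main_of_min (x0 : 'cV[R]_(m + k)) : sqnorm x0 = 1 ->
  (forall x, sqnorm x = 1 -> hhat h l s theta v x0 <= hhat h l s theta v x) ->
  exists rhop rhom : R,
    is_min (fun XY : 'cV[R]_m * R => sqnorm XY.1 + XY.2 ^+ 2 = 1 /\ 0 <= XY.2)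
      (fun XY => fhat h l s theta v XY.1 XY.2) rhop /\
    is_min (fun XY : 'cV[R]_m * R => sqnorm XY.1 + XY.2 ^+ 2 = 1 /\ XY.2 <= 0)
      (fun XY => fhat h l s theta v XY.1 (- XY.2)) rhom /\
    is_min (fun x : 'cV[R]_(m + k) => sqnorm x = 1)
      (hhat h l s theta v) (Num.min rhop rhom) /\
    is_min (fun x : 'cV[R]_(m + k) => sqnorm x <= 1)
      (hhat h l s theta v) (Num.min rhop rhom).
Proof.
move=> hx0 hmin.
have low X Y : sqnorm X + Y ^+ 2 = 1 -> 0 <= Y ->
    hhat h l s theta v x0 <= fhat h l s theta v X Y.
  by move=> H Y0; have [x hx <-] := @lift X Y H Y0; apply: hmin.
have ball x : sqnorm x <= 1 ->
  [/\ sqnorm (l^T *m x) + Num.sqrt (1 - sqnorm (l^T *m x)) ^+ 2 = 1,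
      0 <= Num.sqrt (1 - sqnorm (l^T *m x)) &
      hhat h l s theta v x0 <= hhat h l s theta v x].
  move=> hx.
  have h0 : 0 <= 1 - sqnorm (l^T *m x).
    by rewrite subr_ge0 (le_trans (lTx_le x)).
  have e1 : sqnorm (l^T *m x) + Num.sqrt (1 - sqnorm (l^T *m x)) ^+ 2 = 1.
    by rewrite sqr_sqrtr // addrC subrK.
  split => //; first exact: sqrtr_ge0.
  by rewrite [hhat _ _ _ _ _ x]hhat_fhat; apply: low => //; apply: sqrtr_ge0.
have [e1 e2 _] := ball x0 (ltac:(by rewrite hx0)).
exists (hhat h l s theta v x0), (hhat h l s theta v x0); rewrite minxx.
split; [|split; [|split]].
- split; last by case=> X Y [] /=; apply: low.
  by exists (l^T *m x0, Num.sqrt (1 - sqnorm (l^T *m x0))) => //; rewrite hhat_fhat.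
- split.
    exists (l^T *m x0, - Num.sqrt (1 - sqnorm (l^T *m x0))) => /=.
      by rewrite sqrrN oppr_le0.
    by rewrite opprK hhat_fhat.
  case=> X Y [] /= H Y0; apply: low; first by rewrite sqrrN.
  by rewrite oppr_ge0.
- by split; [exists x0 | apply: hmin].
- split; first by exists x0 => //; rewrite hx0.
  by move=> x /ball [].
Qed.
End Alg.
From mathcomp Require Import all_classical all_reals all_analysis.
Require Import Defs.
Import Order.TTheory GRing.Theory Num.Theory.
Import numFieldNormedType.Exports.
Local Open Scope classical_set_scope.
Local Open Scope ring_scope.

Section An.
Variables (R : realType) (n : nat).
Local Notation T := 'rV[R]_n.

Lemma c_sum (I : Type) (rr : seq I) (P : pred I) (F : I -> T -> R) :
  (forall i, continuous (F i)) -> continuous (fun w => \sum_(i <- rr | P i) F i w).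
Proof.
move=> HF; elim: rr => [|a rr IH].
  have -> : (fun w : T => \sum_(i <- [::] | P i) F i w) = (fun=> 0).
    by apply/funext => w; rewrite big_nil.
  exact: cst_continuous.
case Pa: (P a).
  have -> : (fun w => \sum_(i <- a :: rr | P i) F i w) =
     (fun w => F a w + \sum_(i <- rr | P i) F i w).
    by apply/funext => w; rewrite big_cons Pa.
  by move=> x; apply: continuousD; [apply: HF | apply: IH].
have -> : (fun w => \sum_(i <- a :: rr | P i) F i w) =
     (fun w => \sum_(i <- rr | P i) F i w).
  by apply/funext => w; rewrite big_cons Pa.
exact: IH.
Qed.

Lemma c_prod (I : Type) (rr : seq I) (P : pred I) (F : I -> T -> R) :
  (forall i, continuous (F i)) -> continuous (fun w => \prod_(i <- rr | P i) F i w).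
Proof.
move=> HF; elim: rr => [|a rr IH].
  have -> : (fun w : T => \prod_(i <- [::] | P i) F i w) = (fun=> 1).
    by apply/funext => w; rewrite big_nil.
  exact: cst_continuous.
case Pa: (P a).
  have -> : (fun w => \prod_(i <- a :: rr | P i) F i w) =
     (fun w => F a w * \prod_(i <- rr | P i) F i w).
    by apply/funext => w; rewrite big_cons Pa.
  by move=> x; apply: continuousM; [apply: HF | apply: IH].
have -> : (fun w => \prod_(i <- a :: rr | P i) F i w) =
     (fun w => \prod_(i <- rr | P i) F i w).
  by apply/funext => w; rewrite big_cons Pa.
exact: IH.
Qed.

Lemma c_exp (f : T -> R) p : continuous f -> continuous (fun w => f w ^+ p).
Proof.
move=> Hf; have -> : (fun w => f w ^+ p) = (fun w => \prod_(i < p) f w).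
  by apply/funext => w; rewrite prodr_const card_ord.
by apply: c_prod.
Qed.

Lemma c_meval p (q : {mpoly R[p]}) (g : 'I_p -> T -> R) :
  (forall i, continuous (g i)) -> continuous (fun w => q.@[fun i => g i w]).
Proof.
move=> Hg; have -> : (fun w => q.@[fun i => g i w]) =
   (fun w => \sum_(mm <- msupp q) q@_mm * \prod_i g i w ^+ mm i).
  by apply/funext => w; rewrite mevalE.
apply: c_sum => mm x; apply: continuousM; first exact: cst_continuous.
by apply: c_prod => i; apply: c_exp.
Qed.

Lemma c_lin p (M : 'M[R]_(p, n)) i : continuous (fun w : T => (M *m w^T) i ord0).
Proof.
have -> : (fun w : T => (M *m w^T) i ord0) = (fun w => \sum_a M i a * w ord0 a).
  by apply/funext => w; rewrite mxE; apply: eq_bigr => a _; rewrite mxE.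
apply: c_sum => a x; apply: continuousM; first exact: cst_continuous.
exact: coord_continuous.
Qed.

Lemma c_add (f g : T -> R) : continuous f -> continuous g ->
  continuous (fun w => f w + g w).
Proof. by move=> Hf Hg x; apply: (continuousD (Hf x) (Hg x)). Qed.
Lemma c_mul (f g : T -> R) : continuous f -> continuous g ->
  continuous (fun w => f w * g w).
Proof. by move=> Hf Hg x; apply: (continuousM (Hf x) (Hg x)). Qed.
End An.

Section EVT.
Variables (R : realType) (m k : nat).
Hypothesis hk : (1 <= k)%N.
Variables (h : {mpoly R[m + k]}) (l : 'M[R]_(m + k, m)) (s : 'M[R]_(m + k, k)).
Hypothesis horth : (row_mx l s)^T *m row_mx l s = 1%:M.
Variables (r : nat) (theta : 'I_r -> R) (v : 'I_r -> 'cV[R]_k).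

Lemma c_sqn p (M : 'M[R]_(p, m + k)) :
  continuous (fun w : 'rV[R]_(m + k) => sqnorm (M *m w^T)).
Proof. by apply: c_sum => b; apply: c_exp; apply: c_lin. Qed.

Lemma c_f : continuous (fun w : 'rV[R]_(m + k) => hhat h l s theta v w^T).
Proof.
pose c := fun w : 'rV[R]_(m + k) => Num.sqrt (1 - sqnorm (l^T *m w^T)).
have cc : continuous c.
  move=> x; apply: (continuous_comp (f := fun w => 1 - sqnorm (l^T *m w^T))
     (g := Num.sqrt)); last exact: sqrt_continuous.
  by apply: continuousB; [apply: cst_continuous | apply: c_sqn].
have -> : (fun w : 'rV[R]_(m + k) => hhat h l s theta v w^T) =
  (fun w => \sum_(j < r) theta j * h.@[fun i => (l *m l^T *m w^T) i ord0 + c w * (s *m v j) i ord0]).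
  apply/funext => w; rewrite /hhat; apply: eq_bigr => j _; congr (_ * _).
  by rewrite /mevalcv; apply: meval_eq => i; rewrite mxE [X in _ + X]mxE.
apply: c_sum => j x; apply: continuousM; first exact: cst_continuous.
apply: c_meval => i; apply: c_add; first by apply: c_lin.
by apply: c_mul; [apply: cc | apply: cst_continuous].
Qed.

Lemma exists_min : exists2 x0 : 'cV[R]_(m + k), sqnorm x0 = 1 &
  (forall x, sqnorm x = 1 -> hhat h l s theta v x0 <= hhat h l s theta v x).
Proof.
pose A := [set w : 'rV[R]_(m + k) | sqnorm w^T = 1].
have A0 : A !=set0.
  have [x hx _] := @lift R m k l s horth h r theta v hk 0 1
    (ltac:(by rewrite /sqnorm big1 ?add0r ?expr1n // => i _; rewrite mxE expr0n))
    ler01.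
  by exists x^T; rewrite /A /= trmxK.
have cA : compact A.
  apply: (@subclosed_compact _ A
    [set w : 'rV[R]_(m + k) | forall i, w ord0 i \in `[(-1 : R), 1]]).
  - have -> : A = (fun w : 'rV[R]_(m + k) => sqnorm (1%:M *m w^T)) @^-1` [set x | x = 1].
      by apply/funext => w; rewrite /A /= mul1mx.
    by apply: preimage_closed; [move=> x _; apply: c_sqn | apply: closed_eq].
  - by apply: (@rV_compact _ _ (fun=> `[(-1 : R), 1]%classic)) => _; apply: segment_compact.
  - move=> w; rewrite /A /= => Hw i.
    have : w ord0 i ^+ 2 <= 1.
      rewrite -Hw /sqnorm (bigD1 i) //= mxE lerDl.
      by apply: sumr_ge0 => j _; apply: sqr_ge0.
    rewrite -real_normK ?num_real // (expr_le1 (n := 2)) // => Hi.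
    by rewrite in_itv /= -ler_norml.
have [w0 /set_mem Aw0 Hmin] := compact_EVT_min A0 cA (continuous_subspaceT c_f).
exists w0^T => // x hx.
have := Hmin x^T; rewrite trmxK; apply; apply/mem_set; rewrite /A /= trmxK //.
Qed.
End EVT.

Theorem mainTheorem5 (R : realType) (m k : nat) (hm : (1 <= m)%N) (hk : (1 <= k)%N)
  (h : {mpoly R[m + k]}) (l : 'M[R]_(m + k, m)) (s : 'M[R]_(m + k, k))
  (horth : (row_mx l s)^T *m row_mx l s = 1%:M)
  (r : nat) (theta : 'I_r -> R) (v : 'I_r -> 'cV[R]_k)
  (htheta : forall j, 0 < theta j) (hv : forall j, sqnorm (v j) <= 1) :
  exists rhop rhom : R,
    is_min (fun XY : 'cV[R]_m * R => sqnorm XY.1 + XY.2 ^+ 2 = 1 /\ 0 <= XY.2)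
      (fun XY => fhat h l s theta v XY.1 XY.2) rhop /\
    is_min (fun XY : 'cV[R]_m * R => sqnorm XY.1 + XY.2 ^+ 2 = 1 /\ XY.2 <= 0)
      (fun XY => fhat h l s theta v XY.1 (- XY.2)) rhom /\
    is_min (fun x : 'cV[R]_(m + k) => sqnorm x = 1)
      (hhat h l s theta v) (Num.min rhop rhom) /\
    is_min (fun x : 'cV[R]_(m + k) => sqnorm x <= 1)
      (hhat h l s theta v) (Num.min rhop rhom).
Proof.
have [x0 hx0 hmin] := @exists_min R m k hk h l s horth r theta v.
exact: (@main_of_min R m k l s horth h r theta v hk x0 hx0 hmin).
Qed.
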